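(* Let $L>0$, $h_{min}>0$, $\mu_1>0$, $\mu_2>0$, and define $\tilde g(x)=x^2+h_{min}^2$ and $\tilde f(x)=(x^2+h_{min}^2)\big((x-L)^2+h_{min}^2\big)$. Consider $$\max_{x\in[0,L]}\ \min\left\{\frac{\mu_1}{\tilde g(x)},\ \frac{\mu_2\,\tilde g(x)}{\tilde f(x)}\right\}.$$ Let $\nu=\frac{h_{min}^2}{L^2+h_{min}^2}$ and, when $\mu_1\ne\mu_2$, $k=\frac{\mu_1}{\mu_1-\mu_2}$. Then the problem has a unique maximizer $x^*$, given by $$x^*=\begin{cases}0,& \mu_1\le \nu\mu_2,\\ L,& \mu_1\ge \mu_2/\nu,\\ \frac{L}{2},& \mu_1=\mu_2,\\ kL+\sqrt{k^2L^2-kL^2-h_{min}^2},& \nu\mu_2<\mu_1<\mu_2,\\ kL-\sqrt{k^2L^2-kL^2-h_{min}^2},& \mu_2<\mu_1<\mu_2/\nu.\end{cases}$$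
   Context: This is the reduced UAV placement problem for a decode-and-forward full-duplex relay (source at $(0,0,0)$, destination at $(L,0,0)$, UAV at $(x,0,h_{min})$); in the paper $\mu_1=\frac{p_S}{\rho p_R+\sigma^2}$ and $\mu_2=\frac{Np_R}{\sigma^2}$, but only $\mu_1,\mu_2>0$ is needed. *)

(* Defs.v *)
From mathcomp Require Import all_boot all_order all_algebra.
From mathcomp Require Import reals.
Set Implicit Arguments. Unset Strict Implicit. Unset Printing Implicit Defensive.
Import Order.TTheory GRing.Theory Num.Theory.
Local Open Scope ring_scope.

Definition gt (R : realType) (h x : R) : R := x ^+ 2 + h ^+ 2.

Definition ft (R : realType) (L h x : R) : R :=
  (x ^+ 2 + h ^+ 2) * ((x - L) ^+ 2 + h ^+ 2).

Definition obj (R : realType) (L h mu1 mu2 x : R) : R :=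
  Num.min (mu1 / gt h x) (mu2 * gt h x / ft L h x).

Definition unique_maximizer (R : realType) (F : R -> R) (L xs : R) : Prop :=
  [/\ 0 <= xs <= L,
      (forall x, 0 <= x <= L -> F x <= F xs) &
      (forall y, 0 <= y <= L -> (forall x, 0 <= x <= L -> F x <= F y) -> y = xs)].

(* Main.v *)
Require Import Defs.
From mathcomp Require Import all_boot all_order all_algebra.
From mathcomp Require Import reals ring lra.
Import Order.TTheory GRing.Theory Num.Theory.
Local Open Scope ring_scope.

Section H.
Variable R : realType.

Lemma pos_sq (x h : R) : 0 < h -> 0 < x ^+ 2 + h ^+ 2.
Proof. move=> hh; exact: ltr_wpDl (sqr_ge0 x) (exprn_gt0 2 hh). Qed.

Lemma obj_eq (L h mu1 mu2 x : R) : 0 < h ->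
  obj L h mu1 mu2 x = Num.min (mu1 / (x ^+ 2 + h ^+ 2)) (mu2 / ((x - L) ^+ 2 + h ^+ 2)).
Proof.
move=> hh; rewrite /obj /ft /gt; congr Num.min.
have g0 : x ^+ 2 + h ^+ 2 != 0 by rewrite gt_eqF // pos_sq.
have q0 : (x - L) ^+ 2 + h ^+ 2 != 0 by rewrite gt_eqF // pos_sq.
by field; rewrite g0 q0.
Qed.

Lemma inv_lt (mu a b : R) : 0 < mu -> 0 < a -> a < b -> mu / b < mu / a.
Proof.
move=> hm ha hab; rewrite ltr_pM2l // ltf_pV2 // posrE //; lra.
Qed.

Lemma crit (L h mu1 mu2 xs : R) : 0 < L -> 0 < h -> 0 < mu1 -> 0 < mu2 ->
  0 <= xs <= L ->
  (0 < xs -> mu2 / ((xs - L) ^+ 2 + h ^+ 2) <= mu1 / (xs ^+ 2 + h ^+ 2)) ->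
  (xs < L -> mu1 / (xs ^+ 2 + h ^+ 2) <= mu2 / ((xs - L) ^+ 2 + h ^+ 2)) ->
  unique_maximizer (obj L h mu1 mu2) L xs.
Proof.
move=> hL hh h1 h2 hxs H1 H2.
have key : forall x, 0 <= x <= L -> x != xs -> obj L h mu1 mu2 x < obj L h mu1 mu2 xs.
  move=> x /andP[x0 xL] nx; rewrite !obj_eq //.
  case: (ltgtP x xs) nx => // hx _.
  - have xs0 : 0 < xs by lra.
    rewrite (min_r (H1 xs0)).
    have : Num.min (mu1 / (x ^+ 2 + h ^+ 2)) (mu2 / ((x - L) ^+ 2 + h ^+ 2)) <= mu2 / ((x - L) ^+ 2 + h ^+ 2).
      by rewrite ge_min lexx orbT.
    move/le_lt_trans; apply; apply: inv_lt => //; first exact: pos_sq.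
    case/andP: hxs => _ ?; nra.
  - have xsL : xs < L by lra.
    rewrite (min_l (H2 xsL)).
    have : Num.min (mu1 / (x ^+ 2 + h ^+ 2)) (mu2 / ((x - L) ^+ 2 + h ^+ 2)) <= mu1 / (x ^+ 2 + h ^+ 2).
      by rewrite ge_min lexx.
    move/le_lt_trans; apply; apply: inv_lt => //; first exact: pos_sq.
    case/andP: hxs => ? _; nra.
split => //.
- move=> x hx; case: (eqVneq x xs) => [->//|nx]; exact/ltW/key.
- move=> y hy hmax; apply/eqP; apply/negPn/negP => ny.
  have := key y hy ny; have := hmax xs hxs; lra.
Qed.

Lemma div_le (a b g q : R) : 0 < g -> 0 < q -> a * q <= b * g -> a / g <= b / q.
Proof. move=> hg hq H. rewrite ler_pdivrMr // mulrAC ler_pdivlMr //. Qed.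

Lemma cross (L h mu1 mu2 xs : R) : 0 < L -> 0 < h -> 0 < mu1 -> 0 < mu2 ->
  0 <= xs <= L -> mu1 * ((xs - L) ^+ 2 + h ^+ 2) = mu2 * (xs ^+ 2 + h ^+ 2) ->
  unique_maximizer (obj L h mu1 mu2) L xs.
Proof.
move=> hL hh h1 h2 hxs E.
have e : mu1 / (xs ^+ 2 + h ^+ 2) = mu2 / ((xs - L) ^+ 2 + h ^+ 2).
  have g0 : xs ^+ 2 + h ^+ 2 != 0 by rewrite gt_eqF // pos_sq.
  have q0 : (xs - L) ^+ 2 + h ^+ 2 != 0 by rewrite gt_eqF // pos_sq.
  by apply/eqP; rewrite eqr_div // E mulrC.
by apply: crit => // _; rewrite e.
Qed.
End H.

Theorem lemma3 (R : realType) (L h mu1 mu2 : R) :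
  0 < L -> 0 < h -> 0 < mu1 -> 0 < mu2 ->
  let nu := h ^+ 2 / (L ^+ 2 + h ^+ 2) in
  let k := mu1 / (mu1 - mu2) in
  exists xs : R,
    unique_maximizer (obj L h mu1 mu2) L xs /\
    [/\ (mu1 <= nu * mu2 -> xs = 0),
        (mu2 / nu <= mu1 -> xs = L),
        (mu1 = mu2 -> xs = L / 2),
        (nu * mu2 < mu1 < mu2 ->
           xs = k * L + Num.sqrt (k ^+ 2 * L ^+ 2 - k * L ^+ 2 - h ^+ 2)) &
        (mu2 < mu1 < mu2 / nu ->
           xs = k * L - Num.sqrt (k ^+ 2 * L ^+ 2 - k * L ^+ 2 - h ^+ 2))].
Proof.
move=> hL hh h1 h2 nu k.
have S0 : 0 < L ^+ 2 + h ^+ 2 by exact: pos_sq.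
have H0 : 0 < h ^+ 2 by exact: exprn_gt0.
have L0 : 0 < L ^+ 2 by exact: exprn_gt0.
have hN : nu * mu2 * (L ^+ 2 + h ^+ 2) = h ^+ 2 * mu2.
  by rewrite /nu; field; rewrite gt_eqF.
have hM : mu2 / nu * h ^+ 2 = mu2 * (L ^+ 2 + h ^+ 2).
  by rewrite /nu; field; rewrite !gt_eqF.
have e1 : (mu1 <= nu * mu2) = (mu1 * (L ^+ 2 + h ^+ 2) <= h ^+ 2 * mu2).
  by rewrite -(ler_pM2r S0) hN.
have e2 : (mu2 / nu <= mu1) = (mu2 * (L ^+ 2 + h ^+ 2) <= mu1 * h ^+ 2).
  by rewrite -(ler_pM2r H0) hM.
have e3 : (nu * mu2 < mu1) = (h ^+ 2 * mu2 < mu1 * (L ^+ 2 + h ^+ 2)).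
  by rewrite -(ltr_pM2r S0) hN.
have e4 : (mu1 < mu2 / nu) = (mu1 * h ^+ 2 < mu2 * (L ^+ 2 + h ^+ 2)).
  by rewrite -(ltr_pM2r H0) hM.
rewrite e1 e2 e3 e4.
have p1 : 0 < mu1 * L ^+ 2 by exact: mulr_gt0.
have p2 : 0 < mu2 * L ^+ 2 by exact: mulr_gt0.
have p3 : 0 < mu1 * h ^+ 2 by exact: mulr_gt0.
have p4 : 0 < mu2 * h ^+ 2 by exact: mulr_gt0.
have [A|A] := leP (mu1 * (L ^+ 2 + h ^+ 2)) (h ^+ 2 * mu2).
  exists 0; split.
    apply: crit => //; first by rewrite lexx ltW.
      by rewrite ltxx.
    move=> _; apply: div_le; rewrite ?pos_sq //; nra.
  split => //; move=> *; exfalso; nra.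
have [B|B] := leP (mu2 * (L ^+ 2 + h ^+ 2)) (mu1 * h ^+ 2).
  exists L; split.
    apply: crit => //; first by rewrite lexx ltW.
      move=> _; apply: div_le; rewrite ?pos_sq //; nra.
    by rewrite ltxx.
  split => //; move=> *; exfalso; nra.
have [C|C|C] := ltgtP mu1 mu2.
- pose d := mu1 - mu2.
  have d0 : d != 0 by rewrite /d subr_eq0 lt_eqF.
  have hk : k * d = mu1 by rewrite /k /d divfK.
  have kneg : k < 0 by rewrite /d in hk; nra.
  have id1 : (k * L ^+ 2 + h ^+ 2) * d = mu1 * (L ^+ 2 + h ^+ 2) - h ^+ 2 * mu2.
    by rewrite /k /d; field; rewrite /d in d0.
  have p0 : k * L ^+ 2 + h ^+ 2 < 0 by rewrite /d in id1; nra.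
  set D := k ^+ 2 * L ^+ 2 - k * L ^+ 2 - h ^+ 2.
  have D0 : (k * L) ^+ 2 < D by rewrite /D; nra.
  have D0' : 0 <= D by nra.
  set s := Num.sqrt D.
  have s0 : 0 <= s by exact: sqrtr_ge0.
  have s2 : s ^+ 2 = D by exact: sqr_sqrtr.
  have x0 : 0 <= k * L + s.
    have : - (k * L) < s; last lra.
    rewrite -ltr_sqr; first by rewrite sqrrN s2.
      rewrite nnegrE; nra.
    by rewrite nnegrE.
  have xL : k * L + s <= L.
    have : s <= L - k * L; last lra.
    rewrite -ler_sqr ?nnegrE //; last nra.
    rewrite s2 /D; nra.
  exists (k * L + s); split.
    apply: cross => //; first by rewrite x0 xL.
    have idp : mu1 * ((k * L + s - L) ^+ 2 + h ^+ 2) - mu2 * ((k * L + s) ^+ 2 + h ^+ 2)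
      = d * (s ^+ 2 - D).
      by rewrite /D /k /d; field; rewrite /d in d0.
    by apply/eqP; rewrite -subr_eq0 idp s2 subrr mulr0.
  split => //; move=> *; exfalso; nra.
- pose d := mu1 - mu2.
  have d0 : d != 0 by rewrite /d subr_eq0 gt_eqF.
  have hk : k * d = mu1 by rewrite /k /d divfK.
  have kpos : 1 < k by rewrite /d in hk; nra.
  have id1 : ((1 - k) * L ^+ 2 + h ^+ 2) * d = mu1 * h ^+ 2 - mu2 * (L ^+ 2 + h ^+ 2).
    by rewrite /k /d; field; rewrite /d in d0.
  have p0 : (1 - k) * L ^+ 2 + h ^+ 2 < 0 by rewrite /d in id1; nra.
  set D := k ^+ 2 * L ^+ 2 - k * L ^+ 2 - h ^+ 2.
  have D0 : (k * L - L) ^+ 2 < D by rewrite /D; nra.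
  have D0' : 0 <= D by nra.
  set s := Num.sqrt D.
  have s0 : 0 <= s by exact: sqrtr_ge0.
  have s2 : s ^+ 2 = D by exact: sqr_sqrtr.
  have xL : k * L - s <= L.
    have : k * L - L < s; last lra.
    rewrite -ltr_sqr ?nnegrE //; first by rewrite s2.
    nra.
  have x0 : 0 <= k * L - s.
    have : s <= k * L; last lra.
    rewrite -ler_sqr ?nnegrE //; last nra.
    rewrite s2 /D; nra.
  exists (k * L - s); split.
    apply: cross => //; first by rewrite x0 xL.
    have idp : mu1 * ((k * L - s - L) ^+ 2 + h ^+ 2) - mu2 * ((k * L - s) ^+ 2 + h ^+ 2)
      = d * (s ^+ 2 - D).
      by rewrite /D /k /d; field; rewrite /d in d0.
    by apply/eqP; rewrite -subr_eq0 idp s2 subrr mulr0.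
  split => //; move=> *; exfalso; nra.
- exists (L / 2); split.
    apply: cross => //; first by apply/andP; split; lra.
    by rewrite C; field.
  split => //; move=> *; exfalso; nra.
Qed.
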